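(* Let $n$ be a positive integer. Then $\mathsf{QNAADT}(\mathsf{OMB}_n) = \Omega(n)$.
   Context: $\mathsf{OMB}_n:\{0,1\}^n\to\{0,1\}$ is defined by $\mathsf{OMB}_n(x)=1$ if $\max\{i\in[n]:x_i=0\}$ is odd and $0$ otherwise, with $\mathsf{OMB}_n(1^n)=0$. $\mathsf{AND}_S(x)=\prod_{i\in S}x_i$. A quantum non-adaptive AND decision tree of cost $c$ works on a state space $|S_1,\dots,S_c\rangle|b\rangle|w\rangle$ with $S_j\subseteq[n]$, $b\in\{0,1\}^c$ and an arbitrary workspace; it starts from an input-independent state $|\psi\rangle$, applies the oracle $O_x:|S_1,\dots,S_c\rangle|b_1,\dots,b_c\rangle|w\rangle\mapsto|S_1,\dots,S_c\rangle|b_1\oplus\mathsf{AND}_{S_1}(x),\dots,b_c\oplus\mathsf{AND}_{S_c}(x)\rangle|w\rangle$ once, and accepts with probability $\|\Pi O_x|\psi\rangle\|^2$ for a fixed projector $\Pi$. $\mathsf{QNAADT}(f)$ is the minimum cost of such a tree outputting $f(x)$ correctly with probability at least $2/3$ for every $x$. *)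

(* Defs.v *)
From HB Require Import structures.
From mathcomp Require Import all_boot all_order all_algebra.
From mathcomp Require Import complex.
From mathcomp Require Import Rstruct.
Set Implicit Arguments. Unset Strict Implicit. Unset Printing Implicit Defensive.
Import Order.TTheory GRing.Theory Num.Theory.
Local Open Scope ring_scope.

Definition C : numClosedFieldType := (Rdefinitions.R)[i].

(* Inputs x in {0,1}^n; coordinate i : 'I_n stands for position i+1 in [n]. *)
Definition input n := {ffun 'I_n -> bool}.

(* OMB_n(x) = 1 iff max{ i in [n] : x_i = 0 } is odd (1-indexed);
   OMB_n(1^n) = 0.  With 0-indexed positions, 1-indexed position is i.+1. *)
Definition OMB (n : nat) (x : input n) : bool :=
  let Z := [set i : 'I_n | ~~ x i] in
  if Z == set0 then false else odd (\max_(i in Z) (nat_of_ord i)).+1.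

Definition ANDS (n : nat) (S : {set 'I_n}) (x : input n) : bool :=
  [forall i in S, x i].

(* Basis of the state space |S_1,...,S_c>|b_1,...,b_c>|w>, workspace of
   dimension m. *)
Definition basis (n c m : nat) : finType :=
  ({ffun 'I_c -> {set 'I_n}} * {ffun 'I_c -> bool} * 'I_m)%type.

Definition qvec (n c m : nat) := basis n c m -> C.

Definition sqnorm (n c m : nat) (v : qvec n c m) : C :=
  \sum_(k : basis n c m) `|v k| ^+ 2.

Definition oracle_basis (n c m : nat) (x : input n) (k : basis n c m)
  : basis n c m :=
  let: (Ss, bs, w) := k in
  (Ss, [ffun j => bs j (+) ANDS (Ss j) x], w).

(* Its linear extension: (O_x v)(k) = v(O_x^{-1} k) = v(O_x k), as O_x is an
   involution on basis states. *)
Definition oracle (n c m : nat) (x : input n) (v : qvec n c m) : qvec n c m :=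
  fun k => v (oracle_basis x k).

(* Orthogonal projector Pi (Hermitian and idempotent), given by its matrix
   entries in the standard basis. *)
Definition is_projector (n c m : nat) (P : basis n c m -> basis n c m -> C)
  : Prop :=
  (forall i j, P i j = (P j i)^*) /\
  (forall i j, \sum_k P i k * P k j = P i j).

Definition apply_op (n c m : nat) (P : basis n c m -> basis n c m -> C)
  (v : qvec n c m) : qvec n c m :=
  fun i => \sum_j P i j * v j.

Definition accept_prob (n c m : nat) (psi : qvec n c m)
  (P : basis n c m -> basis n c m -> C) (x : input n) : C :=
  sqnorm (apply_op P (oracle x psi)).

Definition qnaadt_computes (n c m : nat) (f : input n -> bool)
  (psi : qvec n c m) (P : basis n c m -> basis n c m -> C) : Prop :=
  sqnorm psi = 1 /\ is_projector P /\
  forall x : input n,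
    if f x then 2%:R / 3%:R <= accept_prob psi P x
    else 1 - accept_prob psi P x >= 2%:R / 3%:R.

(* There is a quantum non-adaptive AND decision tree of cost c computing f
   (with some finite workspace). QNAADT(f) is the least such c. *)
Definition QNAADT_le (n : nat) (f : input n -> bool) (c : nat) : Prop :=
  exists (m : nat) (psi : qvec n c m) (P : basis n c m -> basis n c m -> C),
    qnaadt_computes f psi P.

(* Main.v *)
Require Import Defs.
From HB Require Import structures.
From mathcomp Require Import all_boot all_order all_algebra.
Set Implicit Arguments. Unset Strict Implicit. Unset Printing Implicit Defensive.
Import Order.TTheory GRing.Theory Num.Theory.
Local Open Scope ring_scope.

Definition zin (n j : nat) : input n := [ffun i : 'I_n => (j <= i)%N].

Lemma OMB_zin n j : (j <= n)%N -> OMB (zin n j) = odd j.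
Proof.
move=> hj; rewrite /OMB.
have EZ : [set i : 'I_n | ~~ zin n j i] = [set i : 'I_n | (i < j)%N].
  by apply/setP => i; rewrite !inE ffunE -ltnNge.
rewrite EZ; case: j hj EZ => [|j] hj _.
  have -> : [set i : 'I_n | (i < 0)%N] == set0.
    by apply/eqP/setP => i; rewrite !inE.
  by [].
have hjn : (j < n)%N by [].
have -> : ([set i : 'I_n | (i < j.+1)%N] == set0) = false.
  apply/negbTE/set0Pn; exists (Ordinal hjn); by rewrite inE /=.
have -> : (\max_(i in [set i : 'I_n | (i < j.+1)%N]) (nat_of_ord i)) = j.
  apply/eqP; rewrite eqn_leq; apply/andP; split.
    by apply/bigmax_leqP => i; rewrite inE.
  have := @leq_bigmax_cond _ (fun i : 'I_n => i \in [set i : 'I_n | (i < j.+1)%N]) (fun i => nat_of_ord i) (Ordinal hjn).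
  by rewrite inE /= => ->.
by [].
Qed.

Lemma ANDS_zin n (S : {set 'I_n}) j :
  ANDS S (zin n j) = [forall l in S, (j <= l)%N].
Proof. by rewrite /ANDS; apply: eq_forallb => l /=; rewrite ffunE. Qed.

Definition Qmin n (S : {set 'I_n}) (j : 'I_n) :=
  (j \in S) && [forall l in S, (j <= l)%N].

Lemma ANDS_change n (S : {set 'I_n}) (j : 'I_n) :
  ANDS S (zin n j.+1) != ANDS S (zin n j) -> Qmin S j.
Proof.
rewrite !ANDS_zin /Qmin.
case: (boolP [forall l in S, (j <= l)%N]) => h2; last first.
  case: (boolP [forall l in S, (j < l)%N]) => // h1.
  case/negP: h2; apply/forall_inP => l lS; apply: ltnW.
  exact: (forall_inP h1).
rewrite andbT; apply: contraR => jS; rewrite eqb_id.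
apply/forall_inP => l lS; rewrite ltn_neqAle (forall_inP h2 l lS) andbT.
apply/negP => /eqP e; have el : j = l by apply: val_inj; rewrite /= e. by move: jS; rewrite el lS.
Qed.

Lemma Qmin_le1 n (S : {set 'I_n}) :
  (\sum_(j < n) (Qmin S j : nat) <= 1)%N.
Proof.
case: (pickP (Qmin S)) => [j0 h0|hn]; last by rewrite big1 // => j _; rewrite hn.
rewrite (bigD1 j0) //= h0 big1 // => j hj.
apply/eqP; rewrite eqb0; apply/negP => hq.
move: h0 hq; rewrite /Qmin => /andP[s0 f0] /andP[s1 f1].
have a := forall_inP f0 j s1; have b := forall_inP f1 j0 s0.
by move/eqP: hj; apply; apply/val_inj/eqP; rewrite eqn_leq b a.
Qed.

Definition chg n c (Ss : {ffun 'I_c -> {set 'I_n}}) (j : 'I_n) : bool :=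
  [exists i, ANDS (Ss i) (zin n j.+1) != ANDS (Ss i) (zin n j)].

Lemma chg_count n c (Ss : {ffun 'I_c -> {set 'I_n}}) :
  (\sum_(j < n) (chg Ss j : nat) <= c)%N.
Proof.
apply: (@leq_trans (\sum_(j < n) \sum_(i < c) (Qmin (Ss i) j : nat))).
  apply: leq_sum => j _; case: (boolP (chg Ss j)) => // /existsP[i hi].
  by rewrite (bigD1 i) //= (ANDS_change hi).
rewrite exchange_big /=.
apply: (@leq_trans (\sum_(i < c) 1)); first by apply: leq_sum => i _; apply: Qmin_le1.
by rewrite sum_nat_const card_ord muln1.
Qed.

From mathcomp Require Import complex Rstruct ring lra.

Section Analytic.
Variables n c m : nat.
Local Notation qv := (qvec n c m).

Definition ip (u v : qv) : C := \sum_k (u k)^* * v k.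

Lemma sqnorm_ip (v : qv) : sqnorm v = ip v v.
Proof. by apply: eq_bigr => k _; rewrite normCKC. Qed.

Lemma sqnorm_ge0 (v : qv) : 0 <= sqnorm v.
Proof. by apply: sumr_ge0 => k _; rewrite exprn_ge0. Qed.

Lemma proj_ip (P : basis n c m -> basis n c m -> C) (w : qv) :
  is_projector P -> ip (apply_op P w) (apply_op P w) = ip w (apply_op P w).
Proof.
case=> h1 h2; rewrite /ip /apply_op.
under eq_bigr => i _ do rewrite rmorph_sum mulr_suml.
rewrite exchange_big /=; apply: eq_bigr => j _.
transitivity (\sum_i \sum_k (w j)^* * (P j i * P i k * w k)).
  apply: eq_bigr => i _; rewrite mulr_sumr; apply: eq_bigr => k _.
  rewrite rmorphM /= -(h1 j i); ring.
rewrite exchange_big /= mulr_sumr; apply: eq_bigr => k _.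
rewrite -(h2 j k) mulr_suml mulr_sumr; apply: eq_bigr => i _; ring.
Qed.

Lemma proj_contract (P : basis n c m -> basis n c m -> C) (w : qv) :
  is_projector P -> sqnorm (apply_op P w) <= sqnorm w.
Proof.
move=> hP; set b := apply_op P w.
have h0 := sqnorm_ge0 (fun k => w k - b k).
have E : \sum_k (w k - b k)^* * (w k - b k) =
   \sum_k ((w k)^* * w k) - \sum_k ((w k)^* * b k) - \sum_k ((b k)^* * w k)
   + \sum_k ((b k)^* * b k).
  rewrite -!sumrB -big_split /=; apply: eq_bigr => k _; rewrite rmorphB /=; ring.
have E2 : \sum_k ((b k)^* * w k) = (\sum_k ((w k)^* * b k))^*.
  rewrite rmorph_sum; apply: eq_bigr => k _; rewrite rmorphM /= conjCK; ring.
have E3 : \sum_k ((w k)^* * b k) = sqnorm b.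
  by rewrite sqnorm_ip /b (proj_ip w hP).
move: h0; rewrite sqnorm_ip /ip E E2 E3 (geC0_conj (sqnorm_ge0 b)).
rewrite -/(ip w w) -sqnorm_ip.
rewrite -/(ip b b) -sqnorm_ip subrK subr_ge0 //.
Qed.

End Analytic.

Lemma sq_le (t s r : C) : 0 <= t -> 0 <= s -> 0 <= r -> t <= s + r ->
  t ^+ 2 <= (s + r) ^+ 2.
Proof. by move=> ht hs hr h; rewrite !expr2 ler_pM. Qed.

Lemma pt1 (x y : C) :
  3%:R * `|x| ^+ 2 <= 12%:R * `|x - y| ^+ 2 + 4%:R * `|y| ^+ 2.
Proof.
set s := `|x - y|; set r := `|y|.
have hx : `|x| <= s + r by rewrite -[x in `|x|](subrK y) ler_normD.
have := sq_le (normr_ge0 x) (normr_ge0 (x - y)) (normr_ge0 y) hx.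
move=> h; apply: (le_trans (ler_wpM2l _ h)); first by rewrite ler0n.
rewrite -subr_ge0.
have -> : 12%:R * s ^+ 2 + 4%:R * r ^+ 2 - 3%:R * (s + r) ^+ 2 = (3%:R * s - r) ^+ 2 by ring.
rewrite -real_normK ?exprn_ge0 //.
by rewrite realB // ?realM ?normr_real // realn.
Qed.

Lemma pt2 (x y : C) :
  `|x - y| ^+ 2 <= 2%:R * `|x| ^+ 2 + 2%:R * `|y| ^+ 2.
Proof.
set s := `|x|; set r := `|y|.
have hx : `|x - y| <= s + r by rewrite /r /s -(normrN y) ler_normD.
have := sq_le (normr_ge0 _) (normr_ge0 x) (normr_ge0 y) hx.
move=> h; apply: (le_trans h).
rewrite -subr_ge0.
have -> : 2%:R * s ^+ 2 + 2%:R * r ^+ 2 - (s + r) ^+ 2 = (s - r) ^+ 2 by ring.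
rewrite -real_normK ?exprn_ge0 //.
by rewrite realB // ?normr_real.
Qed.

Section Step.
Variables n c m : nat.
Local Notation qv := (qvec n c m).

Lemma apply_opB (P : basis n c m -> basis n c m -> C) (u v : qv) k :
  apply_op P u k - apply_op P v k = apply_op P (fun j => u j - v j) k.
Proof. by rewrite /apply_op -sumrB; apply: eq_bigr => j _; rewrite mulrBr. Qed.

Lemma sqnormC (u v : qv) :
  sqnorm (fun k => u k - v k) = sqnorm (fun k => v k - u k).
Proof. by apply: eq_bigr => k _; rewrite distrC. Qed.

Lemma step (P : basis n c m -> basis n c m -> C) (u v : qv) :
  is_projector P ->
  2%:R / 3%:R <= sqnorm (apply_op P u) ->
  2%:R / 3%:R <= 1 - sqnorm (apply_op P v) ->
  1 <= 18%:R * sqnorm (fun k => u k - v k).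
Proof.
move=> hP H1 H2.
set a := apply_op P u; set b := apply_op P v.
set d := sqnorm (fun k => u k - v k).
set d' := sqnorm (fun k => a k - b k).
have H4 : d' <= d.
  have -> : d' = sqnorm (apply_op P (fun j => u j - v j)).
    by apply: eq_bigr => k _; rewrite apply_opB.
  exact: proj_contract.
have H3 : 3%:R * sqnorm a <= 12%:R * d' + 4%:R * sqnorm b.
  rewrite /d' /sqnorm !mulr_sumr -big_split /=; apply: ler_sum => k _; exact: pt1.
rewrite -subr_ge0.
have -> : 18%:R * d - 1 = 18%:R * (d - d') + 3%:R / 2%:R * (12%:R * d' + 4%:R * sqnorm b - 3%:R * sqnorm a)
   + 9%:R / 2%:R * (sqnorm a - 2%:R / 3%:R) + 6%:R * ((1 - sqnorm b) - 2%:R / 3%:R).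
  by field.
by rewrite !addr_ge0 // mulr_ge0 // ?subr_ge0 // divr_ge0 // ler0n.
Qed.

End Step.

Section Hybrid.
Variables n c m : nat.
Local Notation qv := (qvec n c m).

Lemma oracle_basisK (x : input n) : involutive (@oracle_basis n c m x).
Proof.
case=> [[Ss bs] w] /=; congr (_, _, _); apply/ffunP => i; by rewrite !ffunE addbK.
Qed.

Lemma oracle_basis_S (x : input n) k : (@oracle_basis n c m x k).1.1 = k.1.1.
Proof. by case: k => [[Ss bs] w]. Qed.

Lemma reidx (x : input n) (F : {ffun 'I_c -> {set 'I_n}} -> C) (psi : qv) :
  \sum_k F k.1.1 * `|psi (oracle_basis x k)| ^+ 2 = \sum_k F k.1.1 * `|psi k| ^+ 2.
Proof.
rewrite (reindex_inj (inv_inj (oracle_basisK x))) /=.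
by apply: eq_bigr => k _; rewrite oracle_basis_S oracle_basisK.
Qed.

Lemma nochg (j : 'I_n) (k : basis n c m) : ~~ chg k.1.1 j ->
  oracle_basis (zin n j.+1) k = oracle_basis (zin n j) k.
Proof.
case: k => [[Ss bs] w] /= /existsPn h; congr (_, _, _); apply/ffunP => i.
by rewrite !ffunE; move: (h i); rewrite negbK => /eqP ->.
Qed.

Lemma hyb_step (psi : qv) (j : 'I_n) :
  sqnorm (fun k => oracle (zin n j.+1) psi k - oracle (zin n j) psi k)
  <= 4%:R * \sum_k (chg k.1.1 j)%:R * `|psi k| ^+ 2.
Proof.
rewrite /sqnorm /oracle.
apply: (@le_trans _ _ (\sum_k ((chg k.1.1 j)%:R *
    (2%:R * `|psi (oracle_basis (zin n j.+1) k)| ^+ 2 +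
     2%:R * `|psi (oracle_basis (zin n j) k)| ^+ 2)))).
  apply: ler_sum => k _; case: (boolP (chg k.1.1 j)) => h.
    by rewrite mul1r pt2.
  by rewrite mul0r (nochg h) subrr normr0 expr0n.
under eq_bigr => k _ do rewrite mulrDr.
rewrite big_split /=.
under eq_bigr => k _ do rewrite mulrCA.
under [X in _ + X <= _]eq_bigr => k _ do rewrite mulrCA.
rewrite -!mulr_sumr.
rewrite (reidx (zin n j.+1) (fun Ss => (chg Ss j)%:R)).
rewrite (reidx (zin n j) (fun Ss => (chg Ss j)%:R)).
by rewrite -mulrDl -natrD.
Qed.

Lemma hyb (psi : qv) : sqnorm psi = 1 ->
  \sum_(j < n) sqnorm (fun k => oracle (zin n j.+1) psi k - oracle (zin n j) psi k)
  <= 4%:R * c%:R.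
Proof.
move=> hpsi.
apply: (le_trans (ler_sum _ (fun j _ => hyb_step psi j))).
rewrite -mulr_sumr ler_wpM2l ?ler0n //.
rewrite exchange_big /=.
have -> : (c%:R : C) = c%:R * sqnorm psi by rewrite hpsi mulr1.
rewrite /sqnorm mulr_sumr.
apply: ler_sum => k _; rewrite -mulr_suml ler_wpM2r ?exprn_ge0 //.
by rewrite -natr_sum ler_nat chg_count.
Qed.

End Hybrid.

Theorem theorem4p2 :
  exists eps : rat, 0 < eps /\
    forall (n : nat), (0 < n)%N ->
      forall c : nat, QNAADT_le (@OMB n) c -> eps * n%:R <= c%:R.
Proof.
exists (1 / 72%:R); split; first by rewrite divr_gt0 // ltr0n.
move=> n n0 c [m [psi [P [hpsi [hP hx]]]]].
have key : (n%:R : C) <= 72%:R * c%:R.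
  apply: (@le_trans _ _ (18%:R * \sum_(j < n)
     sqnorm (fun k => oracle (zin n j.+1) psi k - oracle (zin n j) psi k))).
    have -> : (n%:R : C) = \sum_(j < n) 1 by rewrite sumr_const card_ord.
    rewrite mulr_sumr.
    apply: ler_sum => j _.
    have hj1 : (j.+1 <= n)%N := ltn_ord j.
    have hj0 : (j <= n)%N := ltnW hj1.
    have := hx (zin n j); have := hx (zin n j.+1).
    rewrite /accept_prob !OMB_zin //=.
    case: (odd j); rewrite /= => A B.
      by rewrite sqnormC; apply: (step hP).
    by apply: (step hP).
  have h := @hyb n c m psi hpsi.
  apply: (le_trans (ler_wpM2l _ h)); first by rewrite ler0n.
  by rewrite -!natrM ler_nat mulnA.
have kn : (n <= 72 * c)%N by rewrite -(ler_nat C) natrM.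
have : (n%:R : rat) <= 72%:R * c%:R by rewrite -natrM ler_nat.
move=> h; rewrite mul1r mulrC ler_pdivrMr ?ltr0n // mulrC //.
Qed.
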